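(* Let $P$ be a polyhedron (a polyhedral map of genus 0) and $T$ the truncation operation. Then $\mathrm{Aut}(P)=\mathrm{Aut}(T(P))$, in the sense that every automorphism of $T(P)$ is induced by an automorphism of $P$; in particular $|\mathrm{Aut}(T(P))|=|\mathrm{Aut}(P)|$.
   Context: A polyhedral map is a 3-connected graph embedded in a closed orientable surface such that every face is an open disc and the closures of any two faces have connected intersection; $\mathrm{Aut}(P)$ denotes its automorphism group. The truncation $T(P)$ of $P$ is the map obtained by ''cutting off'' every vertex: $T(P)$ has one vertex $(v,e)$ for every pair of a vertex $v$ and an incident edge $e$ of $P$; for each edge $e=vw$ of $P$ the vertices $(v,e)$ and $(w,e)$ are adjacent, and for each vertex $v$ the vertices $(v,e)$, $(v,e')$ are adjacent whenever $e,e'$ are consecutive in the rotation around $v$. Thus each vertex $v$ of degree $d$ is replaced by a face of size $d$ and each face of size $k$ of $P$ becomes a face of size $2k$. Every automorphism of $P$ induces an automorphism of $T(P)$ in the obvious way. *)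

(* Defs.v *)
(* Maps on closed surfaces encoded by flags (the standard
   "flag graph" / monodromy encoding of combinatorial maps). *)
From mathcomp Require Import all_boot all_fingroup.

Set Implicit Arguments.
Unset Strict Implicit.
Unset Printing Implicit Defensive.

(* A flag system: three involutions r0 (change vertex), r1 (change edge),
   r2 (change face) on a finite set of flags. *)
Record fmap (F : finType) := FMap { r0 : F -> F; r1 : F -> F; r2 : F -> F }.

Section MapDefs.
Variable F : finType.
Implicit Types (m : fmap F) (x y : F).

Definition flag_rel m : rel F :=
  fun x y => [|| y == r0 m x, y == r1 m x | y == r2 m x].

Definition is_map m : Prop :=
  (forall x, r0 m (r0 m x) = x) /\ (forall x, r1 m (r1 m x) = x) /\
  (forall x, r2 m (r2 m x) = x) /\
  (forall x, r0 m x != x) /\ (forall x, r1 m x != x) /\ (forall x, r2 m x != x) /\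
  (forall x, r0 m (r2 m x) = r2 m (r0 m x)) /\ (forall x, r0 m (r2 m x) != x) /\
  (forall x y, connect (flag_rel m) x y).

Definition vrel m : rel F := fun x y => (y == r1 m x) || (y == r2 m x).
Definition erel m : rel F := fun x y => (y == r0 m x) || (y == r2 m x).
Definition facerel m : rel F := fun x y => (y == r0 m x) || (y == r1 m x).

Definition vclass m x : {set F} := [set y | connect (vrel m) x y].
Definition eclass m x : {set F} := [set y | connect (erel m) x y].
Definition fclass m x : {set F} := [set y | connect (facerel m) x y].

Definition Vset m : {set {set F}} := [set vclass m x | x in F].
Definition Eset m : {set {set F}} := [set eclass m x | x in F].
Definition Fset m : {set {set F}} := [set fclass m x | x in F].

(* incidence = sharing a flag *)
Definition meets (A B : {set F}) : bool := ~~ [disjoint A & B].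

Definition adj m : rel {set F} :=
  fun A B => [&& A \in Vset m, B \in Vset m, A != B &
                 [exists x, (x \in A) && (r0 m x \in B)]].

Definition simple_graph m : Prop :=
  (forall x, vclass m x != vclass m (r0 m x)) /\
  (forall x y, vclass m x = vclass m y -> vclass m (r0 m x) = vclass m (r0 m y) ->
               eclass m x = eclass m y).

Definition three_connected m : Prop :=
  4 <= #|Vset m| /\
  forall S : {set {set F}}, S \subset Vset m -> #|S| <= 2 ->
    forall A B, A \in Vset m :\: S -> B \in Vset m :\: S ->
      connect [rel C D | adj m C D && (C \notin S) && (D \notin S)] A B.

(* closures of two distinct faces f, g have connected intersection: the common
   boundary vertices are connected through common boundary edges *)
Definition common_adj m (f g : {set F}) : rel {set F} :=
  fun A B => [exists x, [&& x \in A, r0 m x \in B,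
                            meets (eclass m x) f & meets (eclass m x) g]].

Definition faces_meet_well m : Prop :=
  forall f g, f \in Fset m -> g \in Fset m -> f != g ->
    forall A B, A \in Vset m -> B \in Vset m ->
      meets A f -> meets A g -> meets B f -> meets B g ->
      connect (common_adj m f g) A B.

Definition polyhedral m : Prop :=
  simple_graph m /\ three_connected m /\ faces_meet_well m.

Definition orientable m : Prop :=
  exists c : F -> bool, forall x,
    [/\ c (r0 m x) = ~~ c x, c (r1 m x) = ~~ c x & c (r2 m x) = ~~ c x].

Definition genus0 m : Prop :=
  orientable m /\ #|Vset m| + #|Fset m| = #|Eset m| + 2.

Definition is_autb m (g : F -> F) : bool :=
  [forall x, [&& g (r0 m x) == r0 m (g x), g (r1 m x) == r1 m (g x)
               & g (r2 m x) == r2 m (g x)]].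

Definition aut_set m : {set {perm F}} := [set g : {perm F} | is_autb m g].

End MapDefs.

(* Each flag (v,e,f) of P gives three flags of T(P):
   (x,0): T-vertex (v,e), the T-edge coming from e, face from f;
   (x,1): T-vertex (v,e), the corner T-edge inside f, face from f;
   (x,2): T-vertex (v,e), the corner T-edge inside f, the face replacing v. *)
Definition i0 : 'I_3 := @Ordinal 3 0 isT.
Definition i1 : 'I_3 := @Ordinal 3 1 isT.
Definition i2 : 'I_3 := @Ordinal 3 2 isT.

Definition tr0 (F : finType) (m : fmap F) (p : F * 'I_3) : F * 'I_3 :=
  let: (x, i) := p in if val i == 0 then (r0 m x, i) else (r1 m x, i).
Definition tr1 (F : finType) (m : fmap F) (p : F * 'I_3) : F * 'I_3 :=
  let: (x, i) := p in
  if val i == 0 then (x, i1) else if val i == 1 then (x, i0) else (r2 m x, i).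
Definition tr2 (F : finType) (m : fmap F) (p : F * 'I_3) : F * 'I_3 :=
  let: (x, i) := p in
  if val i == 0 then (r2 m x, i) else if val i == 1 then (x, i2) else (x, i1).

Definition trunc (F : finType) (m : fmap F) : fmap (F * 'I_3)%type :=
  FMap (tr0 m) (tr1 m) (tr2 m).

(* Main.v *)
Require Import Defs.
From mathcomp Require Import all_boot all_fingroup zify.
Set Implicit Arguments.
Unset Strict Implicit.
Unset Printing Implicit Defensive.

Lemma connect_closed (T : finType) (e : rel T) (a : pred T) :
  (forall x y, e x y -> a x -> a y) -> forall x y, connect e x y -> a x -> a y.
Proof.
move=> H x y /connectP [p]; elim: p x => [|z p IH] x /=; first by move=> _ ->.
by move=> /andP [exz pz] Hy ax; exact: (IH z pz Hy (H _ _ exz ax)).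
Qed.

Lemma connect_map (T U : finType) (e : rel T) (e' : rel U) (f : T -> U) (I : pred T) :
  (forall x y, I x -> e x y -> I y /\ connect e' (f x) (f y)) ->
  forall x y, I x -> connect e x y -> connect e' (f x) (f y).
Proof.
move=> H x y Ix /connectP [p]; elim: p x Ix => [|z p IH] x Ix /=; first by move=> _ ->.
move=> /andP [exz pz] Hy; have [Iz cz] := H _ _ Ix exz.
exact: connect_trans cz (IH z Iz pz Hy).
Qed.

Lemma class_eq (T : finType) (e : rel T) : symmetric e -> forall a b,
  ([set y | connect e a y] == [set y | connect e b y]) = connect e a b.
Proof.
move=> se a b; have cs := sym_connect_sym se.
apply/eqP/idP.
  move=> E; have: b \in [set y | connect e b y] by rewrite inE connect0.
  by rewrite -E inE.
by move=> ab; apply/setP => y; rewrite !inE (same_connect cs ab).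
Qed.

Lemma card_imset_equiv (T U W : finType) (A : {pred T}) (f : T -> U) (g : T -> W) :
  {in A &, forall x y, (f x == f y) = (g x == g y)} -> #|f @: A| = #|g @: A|.
Proof.
move=> H; pose pr x := (f x, g x).
have -> : [set f x | x in A] = [set fst x | x in [set pr x | x in A]] by rewrite -imset_comp.
have -> : [set g x | x in A] = [set snd x | x in [set pr x | x in A]] by rewrite -imset_comp.
rewrite [LHS]card_in_imset; last first.
  move=> p q /imsetP[x xA ->] /imsetP[y yA ->] /= fxy; congr pair => //.
  by apply/eqP; rewrite -H // fxy.
rewrite [RHS]card_in_imset //.
move=> p q /imsetP[x xA ->] /imsetP[y yA ->] /= gxy; congr pair => //.
by apply/eqP; rewrite H // gxy.
Qed.

Lemma ordE3 (i : 'I_3) : i = i0 \/ i = i1 \/ i = i2.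
Proof.
case: i => [[|[|[|n]]] Hi]; [left|right;left|right;right|by []]; exact: val_inj.
Qed.

Lemma inv_eq (T : eqType) (f : T -> T) : (forall x, f (f x) = x) ->
  forall x y, (y == f x) = (x == f y).
Proof. by move=> inv x y; apply/eqP/eqP => ->; rewrite inv. Qed.
Section M.
Variables (F : finType) (P : fmap F).
Hypotheses (inv0 : forall x, r0 P (r0 P x) = x) (inv1 : forall x, r1 P (r1 P x) = x)
  (inv2 : forall x, r2 P (r2 P x) = x) (c02 : forall x, r0 P (r2 P x) = r2 P (r0 P x)).

Lemma tinv0 z : tr0 P (tr0 P z) = z.
Proof. by case: z => x i; case: (ordE3 i) => [->|[->|->]]; rewrite /= ?inv0 ?inv1. Qed.
Lemma tinv1 z : tr1 P (tr1 P z) = z.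
Proof. by case: z => x i; case: (ordE3 i) => [->|[->|->]]; rewrite /= ?inv2. Qed.
Lemma tinv2 z : tr2 P (tr2 P z) = z.
Proof. by case: z => x i; case: (ordE3 i) => [->|[->|->]]; rewrite /= ?inv2. Qed.

Lemma t2_tr0 z : ((tr0 P z).2 == i2) = (z.2 == i2).
Proof. by case: z => x i; case: (ordE3 i) => [->|[->|->]]. Qed.
Lemma t2_tr1 z : ((tr1 P z).2 == i2) = (z.2 == i2).
Proof. by case: z => x i; case: (ordE3 i) => [->|[->|->]]. Qed.
Lemma tb z : (z.2 == i2) + ((tr2 P z).2 == i2) + ((tr2 P (tr1 P z)).2 == i2) = 1.
Proof. by case: z => x i; case: (ordE3 i) => [->|[->|->]]. Qed.

Lemma vrel_sym : symmetric (vrel P).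
Proof. by move=> x y; rewrite /vrel (inv_eq inv1) (inv_eq inv2). Qed.
Lemma erel_sym : symmetric (erel P).
Proof. by move=> x y; rewrite /erel (inv_eq inv0) (inv_eq inv2). Qed.
Lemma frel_sym : symmetric (facerel P).
Proof. by move=> x y; rewrite /facerel (inv_eq inv0) (inv_eq inv1). Qed.
Lemma tfrel_sym : symmetric (facerel (trunc P)).
Proof. by move=> x y; rewrite /facerel /= (inv_eq tinv0) (inv_eq tinv1). Qed.

Lemma vconn_T x y : connect (vrel P) x y = connect (facerel (trunc P)) (x,i2) (y,i2).
Proof.
apply/idP/idP.
  apply: (connect_map (f := fun x => (x, i2)) (I := predT)) => // a b _ /orP[]/eqP -> ;
  by split=> //; apply: connect1; rewrite /facerel /= eqxx ?orbT.
move=> H; have := connect_map (e' := vrel P) (f := fst) (I := fun z => z.2 == i2) (x := (x,i2)) (y := (y,i2)) _ (eqxx _) H.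
apply=> -[a i] b /= /eqP -> /orP[]/eqP -> /=; split=> //;
by apply: connect1; rewrite /vrel eqxx ?orbT.
Qed.

Lemma fconn_T x y : connect (facerel P) x y = connect (facerel (trunc P)) (x,i0) (y,i0).
Proof.
apply/idP/idP.
  apply: (connect_map (f := fun x => (x, i0)) (I := predT)) => // a b _ /orP[]/eqP -> ;
  split=> //.
    by apply: connect1; rewrite /facerel /= eqxx.
  apply: (@connect_trans _ _ (a, i1)); first by apply: connect1; rewrite /facerel /= eqxx orbT.
  apply: (@connect_trans _ _ (r1 P a, i1)); first by apply: connect1; rewrite /facerel /= eqxx.
  by apply: connect1; rewrite /facerel /= eqxx orbT.
move=> H; have := connect_map (e' := facerel P) (f := fst) (I := fun z => z.2 != i2) (x := (x,i0)) (y := (y,i0)) _ isT H.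
apply=> -[a i] b /=; case: (ordE3 i) => [->|[->|->]] //= _ /orP[]/eqP -> /=; split=> //;
by apply: connect1; rewrite /facerel eqxx ?orbT.
Qed.


Lemma aut_conn (h : {perm F * 'I_3}) :
  (forall z, h (tr0 P z) = tr0 P (h z)) -> (forall z, h (tr1 P z) = tr1 P (h z)) ->
  forall a b, connect (facerel (trunc P)) (h a) (h b) = connect (facerel (trunc P)) a b.
Proof.
move=> h0 h1.
have step (k : F * 'I_3 -> F * 'I_3) : (forall z, k (tr0 P z) = tr0 P (k z)) ->
    (forall z, k (tr1 P z) = tr1 P (k z)) -> forall a b,
    connect (facerel (trunc P)) a b -> connect (facerel (trunc P)) (k a) (k b).
  move=> k0 k1 a b; apply: (connect_map (I:=predT)) => // u v _ /orP[]/eqP -> ; split => //;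
  by apply: connect1; rewrite /facerel /= ?k0 ?k1 eqxx ?orbT.
move=> a b; apply/idP/idP; last exact: step.
have g0 z : h^-1%g (tr0 P z) = tr0 P (h^-1%g z).
  by apply: (@perm_inj _ h); rewrite permKV h0 permKV.
have g1 z : h^-1%g (tr1 P z) = tr1 P (h^-1%g z).
  by apply: (@perm_inj _ h); rewrite permKV h1 permKV.
by move/(step _ g0 g1); rewrite !permK.
Qed.

Hypotheses (fp0 : forall x, r0 P x != x) (fp1 : forall x, r1 P x != x)
  (fp2 : forall x, r2 P x != x) (fp02 : forall x, r0 P (r2 P x) != x).

Lemma eclass_mem x y : (y \in eclass P x) = (y \in [:: x; r0 P x; r2 P x; r0 P (r2 P x)]).
Proof.
rewrite inE; apply/idP/idP.
  move=> H; apply: (connect_closed (a := mem [:: x; r0 P x; r2 P x; r0 P (r2 P x)])) H _;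
    last exact: mem_head.
  move=> u v /orP[]/eqP -> ; rewrite !inE => /or4P [] /eqP ->;
  by rewrite -?c02 ?inv0 ?inv2 eqxx ?orbT.
rewrite !inE => /or4P [] /eqP -> //.
- by apply: connect1; rewrite /erel eqxx.
- by apply: connect1; rewrite /erel eqxx orbT.
apply: (@connect_trans _ _ (r2 P x)); apply: connect1; rewrite /erel eqxx ?orbT //.
Qed.

Lemma eclass_4 x : #|eclass P x| = 4.
Proof.
rewrite (eq_card (eclass_mem x)); apply/card_uniqP; rewrite /= !inE.
have ab : (x == r0 P x) = false by rewrite eq_sym (negbTE (fp0 x)).
have ac : (x == r2 P x) = false by rewrite eq_sym (negbTE (fp2 x)).
have ad : (x == r0 P (r2 P x)) = false by rewrite eq_sym (negbTE (fp02 x)).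
have bc : (r0 P x == r2 P x) = false.
  apply/negbTE/eqP => E; move: (fp02 x); rewrite c02 E ?inv0 ?inv2 eqxx //.
have bd : (r0 P x == r0 P (r2 P x)) = false by rewrite (inj_eq (can_inj inv0)) ac.
have cd : (r2 P x == r0 P (r2 P x)) = false by rewrite eq_sym (negbTE (fp0 _)).
by rewrite ab ac ad bc bd cd.
Qed.

Hypotheses (K1 : forall x, r0 P x != r1 P x) (K2 : forall x, r0 P (r1 P x) != r1 P (r0 P x)).

Lemma fclass_6 x : 6 <= #|fclass P x|.
Proof.
pose s := [:: x; r0 P x; r1 P x; r0 P (r1 P x); r1 P (r0 P x); r0 P (r1 P (r0 P x))].
have ab : (x == r0 P x) = false by rewrite eq_sym (negbTE (fp0 x)).
have ac : (x == r1 P x) = false by rewrite eq_sym (negbTE (fp1 x)).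
have ad : (x == r0 P (r1 P x)) = false by rewrite (inv_eq inv0) eq_sym (negbTE (K1 x)).
have ae : (x == r1 P (r0 P x)) = false by rewrite (inv_eq inv1) (negbTE (K1 x)).
have af : (x == r0 P (r1 P (r0 P x))) = false by rewrite (inv_eq inv0) (negbTE (fp1 _)).
have bc : (r0 P x == r1 P x) = false := negbTE (K1 x).
have bd : (r0 P x == r0 P (r1 P x)) = false by rewrite (inj_eq (can_inj inv0)) ac.
have be : (r0 P x == r1 P (r0 P x)) = false by rewrite eq_sym (negbTE (fp1 _)).
have bf : (r0 P x == r0 P (r1 P (r0 P x))) = false by rewrite (inj_eq (can_inj inv0)) ae.
have cd : (r1 P x == r0 P (r1 P x)) = false by rewrite eq_sym (negbTE (fp0 _)).
have ce : (r1 P x == r1 P (r0 P x)) = false by rewrite (inj_eq (can_inj inv1)) ab.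
have cf : (r1 P x == r0 P (r1 P (r0 P x))) = false.
  by rewrite (inv_eq inv0) eq_sym (negbTE (K2 x)).
have de : (r0 P (r1 P x) == r1 P (r0 P x)) = false := negbTE (K2 x).
have df : (r0 P (r1 P x) == r0 P (r1 P (r0 P x))) = false.
  by rewrite (inj_eq (can_inj inv0)) (inj_eq (can_inj inv1)) ab.
have ef : (r1 P (r0 P x) == r0 P (r1 P (r0 P x))) = false by rewrite eq_sym (negbTE (fp0 _)).
have us : uniq s by rewrite /s /= !inE ab ac ad ae af bc bd be bf cd ce cf de df ef.
have -> : 6 = #|s| by rewrite (card_uniqP us).
apply: subset_leq_card; apply/subsetP => y; rewrite /s !inE => /orP[/eqP->|/orP[/eqP->|/orP[/eqP->|/orP[/eqP->|/orP[/eqP->|/eqP->]]]]].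
- exact: connect0.
- by apply: connect1; rewrite /facerel eqxx.
- by apply: connect1; rewrite /facerel eqxx orbT.
- apply: (@connect_trans _ _ (r1 P x)); apply: connect1; by rewrite /facerel eqxx ?orbT.
- apply: (@connect_trans _ _ (r0 P x)); apply: connect1; by rewrite /facerel eqxx ?orbT.
apply: (@connect_trans _ _ (r0 P x)); first by apply: connect1; rewrite /facerel eqxx ?orbT.
apply: (@connect_trans _ _ (r1 P (r0 P x))); apply: connect1; by rewrite /facerel eqxx ?orbT.
Qed.


Lemma vstep x y : vrel P x y -> vclass P x = vclass P y.
Proof. by move=> H; apply/eqP; rewrite /vclass class_eq ?connect1 //; exact: vrel_sym. Qed.

Hypothesis sg1 : forall x, vclass P x != vclass P (r0 P x).

Lemma K1_of x : r0 P x != r1 P x.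
Proof.
apply/eqP => E; move: (sg1 x).
by rewrite E (@vstep x (r1 P x)) ?eqxx // /vrel eqxx.
Qed.

Hypotheses (sg2 : forall x y, vclass P x = vclass P y ->
    vclass P (r0 P x) = vclass P (r0 P y) -> eclass P x = eclass P y)
  (c : F -> bool) (hc0 : forall x, c (r0 P x) = ~~ c x) (hc1 : forall x, c (r1 P x) = ~~ c x)
  (hc2 : forall x, c (r2 P x) = ~~ c x)
  (conn : forall x y, connect (flag_rel P) x y) (V4 : 4 <= #|Vset P|).

Lemma K2_of x : r0 P (r1 P x) != r1 P (r0 P x).
Proof.
apply/eqP => E.
have vx : vclass P x = vclass P (r1 P x) by apply: vstep; rewrite /vrel eqxx.
have v0 : vclass P (r0 P x) = vclass P (r0 P (r1 P x)).
  by rewrite E; apply: vstep; rewrite /vrel eqxx.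
have Ee := sg2 vx v0.
have : r1 P x \in eclass P x by rewrite Ee inE connect0.
rewrite eclass_mem !inE => /or4P [] /eqP Ex.
- by move: (fp1 x); rewrite Ex eqxx.
- by move: (K1_of x); rewrite Ex eqxx.
- pose s := [:: x; r0 P x; r2 P x; r0 P (r2 P x)].
  have e1 : r1 P (r0 P x) = r0 P (r2 P x) by rewrite -E Ex.
  have e2 : r1 P (r2 P x) = x by rewrite -Ex inv1.
  have e3 : r1 P (r0 P (r2 P x)) = r0 P x by rewrite -e1 inv1.
  have L y : y \in s.
    apply: (connect_closed (a := mem s)) (conn x y) (mem_head _ _).
    move=> u v /or3P [] /eqP -> ; rewrite !inE => /or4P [] /eqP -> ;
    by rewrite ?Ex ?e1 ?e2 ?e3 -?c02 ?inv0 ?inv2 eqxx ?orbT.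
  have : Vset P \subset [set vclass P x; vclass P (r0 P x)].
    apply/subsetP => S /imsetP [y _ ->]; have := L y; rewrite !inE => /or4P [] /eqP -> ;
      rewrite ?eqxx ?orbT //.
      by rewrite (@vstep (r2 P x) x) ?eqxx // /vrel inv2 eqxx orbT.
    by rewrite (@vstep (r0 P (r2 P x)) (r0 P x)) ?eqxx ?orbT // /vrel e3 eqxx.
  move/subset_leq_card; rewrite cards2 => H; have := leq_trans V4 H.
  by case: (_ != _).
- have := hc1 x; rewrite Ex hc0 hc2 negbK; by case: (c x).
Qed.


Lemma closed_class (A : {set F}) : (forall y, (r0 P y \in A) = (y \in A)) ->
  (forall y, (r1 P y \in A) = (y \in A)) -> forall y z, y \in A -> z \in fclass P y -> z \in A.
Proof.
move=> A0 A1 y z yA; rewrite inE => H.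
apply: (connect_closed (a := mem A)) H yA => u v /orP[]/eqP -> /=; by rewrite ?A0 ?A1.
Qed.

Lemma face_count (A : {set F}) : (forall y, (r0 P y \in A) = (y \in A)) ->
  (forall y, (r1 P y \in A) = (y \in A)) -> 6 * #|[set fclass P y | y in A]| <= #|A|.
Proof.
move=> A0 A1; rewrite -[#|A|]sum1_card (partition_big_imset (fclass P)) /=.
rewrite mulnC -sum_nat_const; apply: leq_sum => j /imsetP [y0 y0A ->].
rewrite sum1dep_card; apply: leq_trans (fclass_6 y0) _.
apply: subset_leq_card; apply/subsetP => z zy; rewrite inE.
rewrite (closed_class A0 A1 y0A zy) /=.
rewrite /fclass (class_eq frel_sym).
by rewrite (sym_connect_sym frel_sym); rewrite inE in zy.
Qed.


Lemma edge_count : #|[set: F]| = 4 * #|Eset P|.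
Proof.
have -> : Eset P = [set eclass P y | y in [set: F]].
  by apply/setP => S; apply/imsetP/imsetP => -[y _ ->]; exists y.
rewrite -[#|[set: F]|]sum1_card (partition_big_imset (eclass P)) /=.
rewrite mulnC -sum_nat_const; apply: eq_bigr => j /imsetP [y0 _ ->].
rewrite sum1dep_card -(eclass_4 y0); apply: eq_card => z; rewrite !inE /=.
by rewrite /eclass (class_eq erel_sym) (sym_connect_sym erel_sym).
Qed.

Lemma face_split (A : {set F}) : (forall y, (r0 P y \in A) = (y \in A)) ->
  (forall y, (r1 P y \in A) = (y \in A)) ->
  #|Fset P| = #|[set fclass P y | y in A]| + #|[set fclass P y | y in ~: A]|.
Proof.
move=> A0 A1.
have -> : Fset P = [set fclass P y | y in A :|: ~: A].
  by rewrite setUCr; apply/setP => S; apply/imsetP/imsetP => -[y _ ->]; exists y.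
rewrite imsetU cardsU.
have -> : [set fclass P y | y in A] :&: [set fclass P y | y in ~: A] = set0.
  apply/setP => S; rewrite !inE; apply/negbTE/andP => -[/imsetP[y yA ->] /imsetP[y' y'A E]].
  have : y' \in fclass P y by rewrite E inE connect0.
  move/(closed_class A0 A1 yA); by rewrite inE in y'A; move/negP: y'A.
by rewrite cards0 subn0.
Qed.


Lemma tf_tr1 w : fclass (trunc P) (tr1 P w) = fclass (trunc P) w.
Proof.
apply/eqP; rewrite /fclass (class_eq tfrel_sym) (sym_connect_sym tfrel_sym).
by apply: connect1; rewrite /facerel /= eqxx orbT.
Qed.

Lemma case2 (h : {perm F * 'I_3}) (h0 : forall z, h (tr0 P z) = tr0 P (h z))
  (h1 : forall z, h (tr1 P z) = tr1 P (h z)) (h2 : forall z, h (tr2 P z) = tr2 P (h z))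
  (Eu : #|Vset P| + #|Fset P| = #|Eset P| + 2) (hn : forall x, (h (x,i2)).2 != i2) : False.
Proof.
pose t z := (h z).2 == i2.
have ht0 z : t (tr0 P z) = t z by rewrite /t h0 t2_tr0.
have ht1 z : t (tr1 P z) = t z by rewrite /t h1 t2_tr1.
have htb z : t z + t (tr2 P z) + t (tr2 P (tr1 P z)) = 1 by rewrite /t !h2 h1; exact: tb.
pose B := [set y | t (y, i0)].
have tB1 y : t (y,i1) = t (y,i0) := ht1 (y,i0).
have tn y : t (y,i2) = false := negbTE (hn y).
have B0 y : (r0 P y \in B) = (y \in B) by rewrite !inE; exact: ht0 (y,i0).
have B1 y : (r1 P y \in B) = (y \in B).
  by rewrite !inE -tB1 -(tB1 y); exact: ht0 (y,i1).
have Bx y : (y \in B) + (r2 P y \in B) = 1.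
  have H := htb (y,i1); change (t (y,i1) + t (y,i2) + t (r2 P y, i0) = 1) in H; move: H.
  by rewrite tB1 tn addn0 !inE.
have CB0 y : (r0 P y \in ~: B) = (y \in ~: B) by rewrite !in_setC B0.
have CB1 y : (r1 P y \in ~: B) = (y \in ~: B) by rewrite !in_setC B1.
have cB : #|~: B| = #|B|.
  have -> : ~: B = [set r2 P y | y in B].
    apply/setP => y; rewrite inE; apply/idP/imsetP.
      move=> yB; exists (r2 P y); last by rewrite inv2.
      by move: (Bx y) yB; case: (y \in B); case: (r2 P y \in B).
    move=> [z zB ->]; by move: (Bx z) zB; case: (z \in B); case: (r2 P z \in B).
  by rewrite card_imset //; exact: (can_inj inv2).
have cT := cardsC B; rewrite -cardsT edge_count in cT.
have fB := face_count B0 B1.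
have fW := face_count CB0 CB1.
have fS := face_split B0 B1.
have VB : #|Vset P| = #|[set fclass P y | y in B]|.
  have -> : #|Vset P| = #|[set fclass (trunc P) (x, i2) | x in F]|.
    apply: card_imset_equiv => x y _ _.
    by rewrite /vclass /fclass (class_eq vrel_sym) (class_eq tfrel_sym) vconn_T.
  have -> : [set fclass (trunc P) (x, i2) | x in F] =
            [set fclass (trunc P) (h (y, i0)) | y in B].
    apply/setP => S; apply/imsetP/imsetP.
      move=> [x _ ->].
      have hz : h (h^-1%g (x, i2)) = (x, i2) by rewrite permKV.
      move: hz; case: (h^-1%g (x, i2)) => y i hz.
      have tz : t (y, i) by rewrite /t hz.
      case: (ordE3 i) hz tz => [->|[->|->]] hz tz.
      - by exists y; rewrite ?inE // hz.
      - exists y; first by rewrite inE -tB1.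
        by rewrite -[(y, i0)]/(tr1 P (y, i1)) h1 hz tf_tr1.
      - by rewrite tn in tz.
    move=> [y yB ->]; rewrite inE /t in yB.
    move: yB; case: (h (y, i0)) => a b /= /eqP ->; by exists a.
  apply: card_imset_equiv => x y _ _.
  by rewrite /fclass (class_eq frel_sym) (class_eq tfrel_sym) aut_conn // fconn_T.
lia.
Qed.


Lemma case1 (h : {perm F * 'I_3}) (h0 : forall z, h (tr0 P z) = tr0 P (h z))
  (h1 : forall z, h (tr1 P z) = tr1 P (h z)) (h2 : forall z, h (tr2 P z) = tr2 P (h z))
  x0 : (h (x0,i2)).2 == i2 -> forall x, (h (x,i2)).2 == i2.
Proof.
pose t z := (h z).2 == i2.
have ht0 z : t (tr0 P z) = t z by rewrite /t h0 t2_tr0.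
have ht1 z : t (tr1 P z) = t z by rewrite /t h1 t2_tr1.
have htb z : t z + t (tr2 P z) + t (tr2 P (tr1 P z)) = 1 by rewrite /t !h2 h1; exact: tb.
move=> tx0 x; apply: (connect_closed (a := fun u => t (u, i2))) (conn x0 x) tx0.
move=> u v /or3P [] /eqP -> tu.
- have H1 := htb (u,i2); change (t (u,i2) + t (u,i1) + t (r2 P u, i1) = 1) in H1.
  have H2 := htb (r0 P u,i1).
  change (t (r0 P u,i1) + t (r0 P u,i2) + t (r2 P (r0 P u), i0) = 1) in H2.
  have E1 : t (r0 P u, i1) = t (u, i1).
    rewrite -[(r0 P u, i1)]/(tr1 P (r0 P u, i0)) ht1.
    rewrite -[(r0 P u, i0)]/(tr0 P (u, i0)) ht0.
    by rewrite -[(u, i1)]/(tr1 P (u, i0)) ht1.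
  have E2 : t (r2 P (r0 P u), i0) = t (r2 P u, i1).
    rewrite -c02 -[(r0 P (r2 P u), i0)]/(tr0 P (r2 P u, i0)) ht0.
    by rewrite -[(r2 P u, i1)]/(tr1 P (r2 P u, i0)) ht1.
  rewrite E1 E2 in H2; rewrite tu in H1.
  move: H1 H2; case: (t (u, i1)); case: (t (r2 P u, i1)); case: (t (r0 P u, i2)) => //.
- by rewrite -[(r1 P u, i2)]/(tr0 P (u, i2)) ht0.
- by rewrite -[(r2 P u, i2)]/(tr1 P (u, i2)) ht1.
Qed.

End M.

Definition liftf (F : finType) (g : {perm F}) (p : F * 'I_3) := (g p.1, p.2).
Lemma liftf_inj (F : finType) (g : {perm F}) : injective (liftf g).
Proof. by move=> [a i] [b j] /= [/perm_inj -> ->]. Qed.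
Definition liftp (F : finType) (g : {perm F}) := perm (@liftf_inj F g).

Theorem lemma8 (F : finType) (P : fmap F)
  (hmap : is_map P) (hpoly : polyhedral P) (hgenus : genus0 P) :
  (forall h : {perm (F * 'I_3)}, h \in aut_set (trunc P) ->
     exists2 g : {perm F}, g \in aut_set P & forall x i, h (x, i) = (g x, i))
  /\ #|aut_set (trunc P)| = #|aut_set P|.
Proof.
have [inv0 [inv1 [inv2 [fp0 [fp1 [fp2 [c02 [fp02 conn]]]]]]]] := hmap.
have [[sg1 sg2] [[V4 _] _]] := hpoly.
have [[c hc] Eu] := hgenus.
have hc0 x : c (r0 P x) = ~~ c x by case: (hc x).
have hc1 x : c (r1 P x) = ~~ c x by case: (hc x).
have hc2 x : c (r2 P x) = ~~ c x by case: (hc x).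
have K1 : forall x, r0 P x != r1 P x := K1_of inv1 inv2 sg1.
have K2 : forall x, r0 P (r1 P x) != r1 P (r0 P x).
  exact: (K2_of inv0 inv1 inv2 c02 fp1 sg1 sg2 hc0 hc1 hc2 conn V4).
have part1 : forall h : {perm (F * 'I_3)}, h \in aut_set (trunc P) ->
     exists2 g : {perm F}, g \in aut_set P & forall x i, h (x, i) = (g x, i).
  move=> h; rewrite inE => /forallP H.
  have h0 z : h (tr0 P z) = tr0 P (h z) by have /and3P[/eqP a _ _] := H z.
  have h1 z : h (tr1 P z) = tr1 P (h z) by have /and3P[_ /eqP a _] := H z.
  have h2 z : h (tr2 P z) = tr2 P (h z) by have /and3P[_ _ /eqP a] := H z.
  case: (boolP [exists x, (h (x,i2)).2 == i2]); last first.
    move/existsPn => hn; exfalso.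
    exact: (case2 inv0 inv1 inv2 c02 fp0 fp1 fp2 fp02 K1 K2 V4 h0 h1 h2 Eu hn).
  move/existsP => [x0 tx0].
  have all2 : forall x, (h (x,i2)).2 == i2 := (case1 c02 conn h0 h1 h2 tx0).
  pose g x := (h (x, i2)).1.
  have hx2 x : h (x, i2) = (g x, i2).
    by move: (all2 x); rewrite /g; case: (h (x, i2)) => a b /= /eqP ->.
  have hx1 x : h (x, i1) = (g x, i1).
    by rewrite -[(x, i1)]/(tr2 P (x, i2)) h2 hx2.
  have hx0 x : h (x, i0) = (g x, i0).
    by rewrite -[(x, i0)]/(tr1 P (x, i1)) h1 hx1.
  have hall x i : h (x, i) = (g x, i).
    by case: (ordE3 i) => [->|[->|->]]; [exact: hx0|exact: hx1|exact: hx2].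
  have ginj : injective g.
    move=> x y E; have : h (x, i0) = h (y, i0) by rewrite !hall E.
    by move/perm_inj => [].
  exists (perm ginj); last by move=> x i; rewrite permE.
  rewrite inE; apply/forallP => x; rewrite !permE; apply/and3P; split; apply/eqP.
  - have := h0 (x, i0); rewrite !hall /=; by case.
  - have := h0 (x, i1); rewrite !hall /=; by case.
  - have := h2 (x, i0); rewrite !hall /=; by case.
split => //.
have -> : aut_set (trunc P) = [set liftp g | g in aut_set P].
  apply/setP => h; apply/idP/imsetP.
    move=> hA; have [g gA hg] := part1 h hA; exists g => //.
    by apply/permP => -[x i]; rewrite permE /liftf /= hg.
  move=> [g gA ->]; rewrite inE in gA; move/forallP: gA => G.
  rewrite inE; apply/forallP => -[x i]; rewrite !permE /liftf /=.
  have /and3P[/eqP g0 /eqP g1 /eqP g2] := G x.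
  case: (ordE3 i) => [->|[->|->]]; rewrite /= ?g0 ?g1 ?g2 !eqxx //.
apply: card_imset => g g' E; apply/permP => x.
by have := congr1 (fun k : {perm F * 'I_3} => k (x, i0)) E; rewrite !permE /liftf /= => -[].
Qed.
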